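(* For integers $n$ and $\lceil n/2\rceil\le j\le n$ let $$B_j=\Big(\frac{n!}{(n-j)!}\Big)^2\frac{1}{j!}\Big(1-\frac{j}{n}\Big)^{n\log n},$$ and set $\varphi_2(n)=\sum_{j=\lceil n/2\rceil}^{n}B_j$. Then for $n\ge 9$, $$\varphi_2(n)\le\exp\Big\{1-\tfrac{3}{1000}\,n\log n\Big\}.$$
   Context: $\log$ denotes the natural logarithm. *)

(* Defs.v *)
From Stdlib Require Import Reals Lra Lia Arith.
Open Scope R_scope.

(* Real power x^y for x >= 0, with the convention 0^y = 0 (y > 0).
   Stdlib's Rpower 0 y = exp (y * ln 0) = 1, hence this wrapper. *)
Definition rpow (x y : R) : R := if Req_EM_T x 0 then 0 else Rpower x y.

Definition B (n j : nat) : R :=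
  (INR (fact n) / INR (fact (n - j))) ^ 2 * / INR (fact j)
  * rpow (1 - INR j / INR n) (INR n * ln (INR n)).

Definition ceil_half (n : nat) : nat := Nat.div (n + 1) 2.

(* phi_2(n) = sum_{j = ceil(n/2)}^{n} B_j ; sum_f_R0 f m has m+1 terms *)
Definition phi2 (n : nat) : R :=
  sum_f_R0 (fun k => B n (k + ceil_half n)%nat) (n - ceil_half n).

(* Main.v *)
Require Import Defs.
From Stdlib Require Import Reals Lra Lia Arith ZArith QArith Qreals.
Open Scope R_scope.

Lemma expM x y : x <= y -> exp x <= exp y.
Proof. intros H; destruct (Rle_lt_or_eq_dec _ _ H) as [h|h].
  - left; apply exp_increasing; auto. - subst; lra. Qed.

Lemma lnM x y : 0 < x -> x <= y -> ln x <= ln y.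
Proof. intros Hx H; destruct (Rle_lt_or_eq_dec _ _ H) as [h|h].
  - left; apply ln_increasing; auto. - subst; lra. Qed.

Lemma ln_le_xm1 x : 0 < x -> ln x <= x - 1.
Proof. intros Hx. pose proof (exp_ineq1_le (ln x)). rewrite exp_ln in H; lra. Qed.

Lemma exp_pow_nat a N : exp (INR N * a) = exp a ^ N.
Proof. induction N as [|N IH].
  - simpl. rewrite Rmult_0_l, exp_0. reflexivity.
  - rewrite S_INR, Rmult_plus_distr_r, Rmult_1_l, exp_plus, IH. simpl. ring. Qed.

Lemma exp_ub_small x : 0 <= x < 1 -> exp x <= / (1 - x).
Proof. intros H. pose proof (exp_ineq1_le (-x)). rewrite exp_Ropp in H0.
  replace (exp x) with (/ / exp x) by (field; apply Rgt_not_eq, exp_pos).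
  apply Rinv_le_contravar; [lra|lra]. Qed.

Lemma E_ub : exp 1 <= 11/4.
Proof. replace 1 with (INR 64 * (1/64)) by (simpl; lra). rewrite exp_pow_nat.
  apply Rle_trans with ((/ (1 - 1/64))^64).
  - apply pow_incr. split; [left; apply exp_pos| apply exp_ub_small; lra].
  - lra. Qed.

Lemma ln2_lb : 69/100 <= ln 2.
Proof. rewrite <- (ln_exp (69/100)). apply lnM; [apply exp_pos|].
  replace (69/100) with (INR 128 * (69/12800)) by (simpl; lra). rewrite exp_pow_nat.
  apply Rle_trans with ((/ (1 - 69/12800))^128).
  - apply pow_incr. split; [left; apply exp_pos| apply exp_ub_small; lra].
  - lra. Qed.

Lemma exp4_lb : 40 <= exp 4.
Proof. replace 4 with (INR 32 * (1/8)) by (simpl; lra). rewrite exp_pow_nat.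
  apply Rle_trans with ((1 + 1/8)^32); [lra|].
  apply pow_incr. split; [lra| apply exp_ineq1_le]. Qed.

Lemma fact_lb m : (1 <= m)%nat -> exp 1 * INR m ^ m <= INR (fact m) * exp 1 ^ m.
Proof. induction m as [|m IH]; intros Hm; [lia|].
  destruct (Nat.eq_dec m 0) as [->|Hm0]. { simpl. lra. }
  specialize (IH ltac:(lia)).
  assert (Hmp : 0 < INR m) by (apply lt_0_INR; lia).
  assert (Hpow : (INR m + 1)^m <= exp 1 * INR m ^ m).
  { replace (INR m + 1) with (INR m * (1 + 1/INR m)) by (field; lra).
    rewrite Rpow_mult_distr. rewrite Rmult_comm. apply Rmult_le_compat_r.
    - apply pow_le; lra.
    - replace (exp 1) with (exp (1/INR m) ^ m).
      + apply pow_incr; split; [|apply exp_ineq1_le].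
        assert (0 < 1/INR m) by (apply Rdiv_lt_0_compat; lra). lra.
      + rewrite <- exp_pow_nat. f_equal. field; lra. }
  change (fact (S m)) with (S m * fact m)%nat. rewrite mult_INR, S_INR.
  cbn [pow].
  assert (0 <= exp 1) by (left; apply exp_pos).
  apply Rle_trans with ((INR m + 1) * exp 1 * (exp 1 * INR m ^ m)).
  - replace (exp 1 * ((INR m + 1) * (INR m + 1) ^ m)) with ((INR m + 1) * exp 1 * (INR m + 1)^m) by ring.
    apply Rmult_le_compat_l; [|exact Hpow]. apply Rmult_le_pos; lra.
  - replace ((INR m + 1) * INR (fact m) * (exp 1 * exp 1 ^ m)) with ((INR m + 1) * exp 1 * (INR (fact m) * exp 1 ^ m)) by ring.
    apply Rmult_le_compat_l; [apply Rmult_le_pos; lra| exact IH]. Qed.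

Lemma amgm_aux m : (forall k, INR (fact (k+m)) <= INR (fact k) * ((2*INR k + INR m + 1)/2)^m)
  /\ (forall k, INR (fact (k+S m)) <= INR (fact k) * ((2*INR k + INR (S m) + 1)/2)^(S m)).
Proof. induction m as [|m [IH1 IH2]].
  - split; intros k.
    + rewrite Nat.add_0_r. simpl. lra.
    + replace (k + 1)%nat with (S k) by lia. change (fact (S k)) with (S k * fact k)%nat.
      rewrite mult_INR, S_INR. simpl. lra.
  - split; [exact IH2|]. intros k.
    replace (k + S (S m))%nat with (S (S k + m)) by lia.
    change (fact (S (S k + m))) with (S (S k + m) * fact (S k + m))%nat.
    rewrite mult_INR. replace (INR (S (S k + m))) with (INR k + 1 + INR m + 1) by (rewrite S_INR, plus_INR, S_INR; ring).
    specialize (IH1 (S k)).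
    change (fact (S k)) with (S k * fact k)%nat in IH1. rewrite mult_INR in IH1.
    repeat rewrite S_INR in *; repeat rewrite plus_INR in *.
    set (c := (2 * INR k + (INR m + 1 + 1) + 1) / 2).
    replace ((2 * (INR k + 1) + INR m + 1) / 2) with c in IH1 by (unfold c; field).
    assert (Hk : 0 <= INR k) by apply pos_INR. assert (Hm : 0 <= INR m) by apply pos_INR.
    assert (Hf : 0 < INR (fact k)) by (apply lt_0_INR, lt_O_fact).
    assert (Hc : 0 <= c) by (unfold c; lra).
    assert (Hcm : 0 <= c ^ m) by (apply pow_le; lra).
    cbn [pow].
    apply Rle_trans with ((INR k + 1 + INR m + 1) * ((INR k + 1) * INR (fact k) * c ^ m)).
    + apply Rmult_le_compat_l; [lra| exact IH1].
    + assert (Hprod : (INR k + 1 + INR m + 1) * (INR k + 1) <= c * c) by (unfold c; nra).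
      replace ((INR k + 1 + INR m + 1) * ((INR k + 1) * INR (fact k) * c ^ m)) with
        (((INR k + 1 + INR m + 1) * (INR k + 1)) * (INR (fact k) * c ^ m)) by ring.
      replace (INR (fact k) * (c * (c * c ^ m))) with ((c * c) * (INR (fact k) * c ^ m)) by ring.
      apply Rmult_le_compat_r; [apply Rmult_le_pos; lra| exact Hprod].
Qed.

Lemma amgm k m : INR (fact (k+m)) <= INR (fact k) * ((2*INR k + INR m + 1)/2)^m.
Proof. apply (proj1 (amgm_aux m)). Qed.

Definition bndR (n j N : nat) : R :=
  (INR (fact n) / INR (fact (n - j))) ^ 2 * / INR (fact j) * (INR (n - j) / INR n) ^ N.

Lemma B_le_bnd n j N : (1 <= n)%nat -> (j <= n)%nat -> INR N <= INR n * ln (INR n) ->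
  B n j <= bndR n j N.
Proof. intros Hn Hj HN. unfold B, bndR, rpow.
  assert (Hnp : 0 < INR n) by (apply lt_0_INR; lia).
  assert (Hy : 1 - INR j / INR n = INR (n - j) / INR n) by (rewrite minus_INR by lia; field; lra).
  rewrite Hy.
  assert (Hpre : 0 <= (INR (fact n) / INR (fact (n - j))) ^ 2 * / INR (fact j)).
  { apply Rmult_le_pos. apply pow2_ge_0. left; apply Rinv_0_lt_compat, lt_0_INR, lt_O_fact. }
  assert (Hy0 : 0 <= INR (n - j) / INR n) by (unfold Rdiv; apply Rmult_le_pos; [apply pos_INR | left; apply Rinv_0_lt_compat; lra]).
  destruct (Req_EM_T (INR (n - j) / INR n) 0) as [h|h].
  - rewrite Rmult_0_r. apply Rmult_le_pos; [exact Hpre| apply pow_le; exact Hy0].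
  - apply Rmult_le_compat_l; [exact Hpre|].
    set (y := INR (n - j) / INR n) in *.
    assert (Hyp : 0 < y) by lra.
    assert (Hy1 : y <= 1).
    { unfold y. apply Rmult_le_reg_r with (INR n); [lra|]. unfold Rdiv.
      rewrite Rmult_assoc, Rinv_l, Rmult_1_r, Rmult_1_l by lra.
      apply le_INR; lia. }
    rewrite <- (Rpower_pow N y Hyp). unfold Rpower. apply expM.
    assert (ln y <= 0) by (rewrite <- ln_1; apply lnM; lra).
    nra.
Qed.


Fixpoint zfact (n:nat) : Z := match n with O => 1%Z | S m => (Z.of_nat (S m) * zfact m)%Z end.

Lemma INR_zfact n : INR (fact n) = IZR (zfact n).
Proof. induction n as [|n IH]; [reflexivity|].
  change (fact (S n)) with (S n * fact n)%nat. rewrite mult_INR, IH, INR_IZR_INZ.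
  change (zfact (S n)) with (Z.of_nat (S n) * zfact n)%Z. rewrite mult_IZR. reflexivity. Qed.

Definition zden (n j : nat) : Z := (zfact (n - j) * zfact (n - j) * zfact j)%Z.
Definition zt (n j N : nat) : Z :=
  ((zfact n * zfact n) / zden n j * Z.of_nat (n - j) ^ Z.of_nat N)%Z.
Definition zdivok (n j : nat) : bool := ((zfact n * zfact n) mod zden n j =? 0)%Z.

Fixpoint zsum (f : nat -> Z) (t : nat) : Z := match t with O => f O | S u => (zsum f u + f t)%Z end.
Fixpoint allb (f : nat -> bool) (t : nat) : bool := match t with O => f O | S u => allb f u && f t end.

Lemma allb_spec f t : allb f t = true -> forall i, (i <= t)%nat -> f i = true.
Proof. induction t as [|t IH]; simpl; intros H i Hi.
  - replace i with 0%nat by lia. exact H.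
  - apply andb_prop in H. destruct H as [H1 H2]. destruct (Nat.eq_dec i (S t)) as [->|h]; [exact H2|].
    apply IH; [exact H1|lia]. Qed.

Lemma IZR_zsum f t : IZR (zsum f t) = sum_f_R0 (fun i => IZR (f i)) t.
Proof. induction t as [|t IH]; simpl; [reflexivity|]. rewrite plus_IZR, IH. reflexivity. Qed.

Lemma sum_div f t D : sum_f_R0 (fun i => f i / D) t = sum_f_R0 f t / D.
Proof. induction t as [|t IH]; simpl; [reflexivity|]. rewrite IH. unfold Rdiv. ring. Qed.

Lemma fact_IZR_pos n : 0 < IZR (zfact n).
Proof. rewrite <- INR_zfact. apply lt_0_INR, lt_O_fact. Qed.

Lemma bndR_zt n j N : (1 <= n)%nat -> zdivok n j = true ->
  bndR n j N = IZR (zt n j N) / IZR (Z.of_nat n ^ Z.of_nat N).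
Proof. intros Hn Hd. unfold zdivok in Hd. apply Z.eqb_eq in Hd.
  assert (Hd0 : (zden n j <> 0)%Z).
  { intro h. pose proof (fact_IZR_pos (n - j)). pose proof (fact_IZR_pos j).
    assert (IZR (zden n j) = 0) by (rewrite h; reflexivity). unfold zden in H1. rewrite !mult_IZR in H1.
    assert (0 < IZR (zfact (n - j)) * IZR (zfact (n - j)) * IZR (zfact j)) by (repeat apply Rmult_lt_0_compat; assumption). lra. }
  pose proof (Z_div_mod_eq_full (zfact n * zfact n) (zden n j)) as Hq. rewrite Hd, Z.add_0_r in Hq.
  unfold bndR, zt, zden. rewrite mult_IZR, <- !pow_IZR, <- !INR_IZR_INZ.
  assert (Hq' : IZR (zfact n * zfact n) = IZR (zden n j) * IZR (zfact n * zfact n / zden n j)) by (rewrite <- mult_IZR; f_equal; exact Hq).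
  unfold zden in Hq'. rewrite !mult_IZR in Hq'.
  rewrite !INR_zfact.
  assert (Hnp : 0 < INR n) by (apply lt_0_INR; lia).
  pose proof (fact_IZR_pos (n - j)). pose proof (fact_IZR_pos j). pose proof (fact_IZR_pos n).
  set (q := IZR (zfact n * zfact n / (zfact (n - j) * zfact (n - j) * zfact j))) in *.
  assert (HnN : 0 < INR n ^ N) by (apply pow_lt; lra).
  unfold Rdiv. rewrite Rpow_mult_distr, pow_inv.
  replace (IZR (zfact n) ^ 2) with (IZR (zfact n) * IZR (zfact n)) by ring.
  rewrite Hq'. rewrite Rpow_mult_distr, pow_inv. field. repeat split; lra.
Qed.

Definition check (n N : nat) : bool :=
  (11 ^ Z.of_nat N <=? 4 ^ Z.of_nat N * Z.of_nat n ^ Z.of_nat n)%Z &&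
  allb (fun k => zdivok n (k + ceil_half n)) (n - ceil_half n) &&
  (1000 * zsum (fun k => zt n (k + ceil_half n) N) (n - ceil_half n) <=?
     (2000 - 12 * Z.of_nat n) * Z.of_nat n ^ Z.of_nat N)%Z.

Lemma ceil_half_le n : (ceil_half n <= n)%nat.
Proof. unfold ceil_half. destruct n; [simpl; lia|]. apply Nat.Div0.div_le_upper_bound; lia. Qed.

Lemma finite_case n N : (9 <= n <= 40)%nat -> check n N = true ->
  phi2 n <= exp (1 - 3 / 1000 * INR n * ln (INR n)).
Proof. intros Hn Hc. unfold check in Hc. apply andb_prop in Hc. destruct Hc as [Hc H2].
  apply andb_prop in Hc. destruct Hc as [H1 H3].
  apply Z.leb_le in H1. apply Z.leb_le, IZR_le in H2. pose proof (allb_spec _ _ H3) as Hdiv.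
  assert (Hnp : 0 < INR n) by (apply lt_0_INR; lia).
  assert (HL : ln (INR n) <= 4).
  { rewrite <- (ln_exp 4). apply lnM; [lra|]. pose proof exp4_lb.
    assert (INR n <= 40) by (replace 40 with (INR 40) by (simpl; lra); apply le_INR; lia). lra. }
  assert (HL0 : 0 <= ln (INR n)).
  { rewrite <- ln_1. apply lnM; [lra|]. replace 1 with (INR 1) by reflexivity. apply le_INR; lia. }
  assert (HN : INR N <= INR n * ln (INR n)).
  { rewrite <- ln_pow by lra. rewrite <- (ln_exp (INR N)). apply lnM; [apply exp_pos|].
    rewrite <- (Rmult_1_r (INR N)), exp_pow_nat.
    apply Rle_trans with ((11/4)^N). { apply pow_incr. split; [left; apply exp_pos| apply E_ub]. }
    apply IZR_le in H1. rewrite mult_IZR, <- !pow_IZR, <- INR_IZR_INZ in H1.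
    replace ((11/4)^N) with (IZR 11 ^ N / IZR 4 ^ N).
    2:{ unfold Rdiv. rewrite <- pow_inv, <- Rpow_mult_distr. reflexivity. }
    assert (0 < IZR 4 ^ N) by (apply pow_lt; lra).
    apply Rmult_le_reg_r with (IZR 4 ^ N); [lra|]. unfold Rdiv. rewrite Rmult_assoc, Rinv_l by lra. lra. }
  unfold phi2. eapply Rle_trans.
  { apply sum_Rle with (Bn := fun k => bndR n (k + ceil_half n) N).
    intros k Hk. apply B_le_bnd; [lia| |exact HN]. pose proof (ceil_half_le n). lia. }
  assert (Heq : sum_f_R0 (fun k => bndR n (k + ceil_half n) N) (n - ceil_half n) =
    IZR (zsum (fun k => zt n (k + ceil_half n) N) (n - ceil_half n)) / IZR (Z.of_nat n ^ Z.of_nat N)).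
  { rewrite IZR_zsum, <- sum_div. apply sum_eq. intros i Hi. apply bndR_zt; [lia|]. apply Hdiv; exact Hi. }
  rewrite Heq. rewrite !mult_IZR, minus_IZR, <- !pow_IZR, <- INR_IZR_INZ in *.
  assert (HnN : 0 < INR n ^ N) by (apply pow_lt; lra).
  set (S := IZR (zsum (fun k : nat => zt n (k + ceil_half n) N) (n - ceil_half n))) in *.
  apply Rle_trans with ((2000 - 12 * INR n) / 1000).
  { unfold Rdiv. apply Rmult_le_reg_r with (INR n ^ N * 1000); [lra|].
    replace (S * / INR n ^ N * (INR n ^ N * 1000)) with (1000 * S) by (field; lra).
    replace ((2000 - 12 * INR n) * / 1000 * (INR n ^ N * 1000)) with ((2000 - 12 * INR n) * INR n ^ N) by (field; lra).
    rewrite mult_IZR, <- INR_IZR_INZ in H2. exact H2. }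
  pose proof (exp_ineq1_le (1 - 3 / 1000 * INR n * ln (INR n))).
  assert (INR n * ln (INR n) <= INR n * 4) by (apply Rmult_le_compat_l; lra).
  assert (INR n <= 40) by (replace 40 with (INR 40) by (simpl; lra); apply le_INR; lia).
  lra.
Qed.

Definition Dn (n : nat) : R := exp 1 * (3 * INR n + 2)^2 / (8 * INR n).
Definition Mn (n : nat) : R :=
  / exp 1 * exp (INR n / 2 * ln (Dn n) - INR n * ln (INR n) * ln 2).

Lemma ceil_half_spec n : (n <= 2 * ceil_half n)%nat.
Proof. unfold ceil_half. pose proof (Nat.div_mod (n+1) 2 ltac:(lia)).
  pose proof (Nat.mod_upper_bound (n+1) 2 ltac:(lia)). lia. Qed.

Lemma div_cross a b p q : 0 < p -> 0 < q -> a * q <= b * p -> a / p <= b / q.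
Proof. intros Hp Hq H. apply Rmult_le_reg_r with (p * q); [nra|].
  replace (a / p * (p * q)) with (a * q) by (field; lra).
  replace (b / q * (p * q)) with (b * p) by (field; lra). exact H. Qed.

Lemma term_bound n j : (40 <= n)%nat -> (ceil_half n <= j <= n)%nat -> B n j <= Mn n.
Proof. intros Hn Hj. pose proof (ceil_half_spec n).
  assert (Hnr : 40 <= INR n) by (replace 40 with (INR 40) by (simpl; lra); apply le_INR; lia).
  assert (HE : 0 < exp 1) by apply exp_pos. pose proof E_ub as HE2.
  assert (HE1 : 2 <= exp 1) by (pose proof (exp_ineq1_le 1); lra).
  assert (HMp : 0 < Mn n) by (unfold Mn; apply Rmult_lt_0_compat; [apply Rinv_0_lt_compat; lra| apply exp_pos]).
  unfold B, rpow. set (k := (n - j)%nat).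
  assert (Hnkj : n = (k + j)%nat) by (unfold k; lia).
  assert (H2k : (2 * k <= n)%nat) by (unfold k; lia).
  assert (Hy : 1 - INR j / INR n = INR k / INR n) by (unfold k; rewrite minus_INR by lia; field; lra).
  rewrite Hy.
  destruct (Req_EM_T (INR k / INR n) 0) as [h|h].
  { rewrite Rmult_0_r. lra. }
  assert (Hk1 : (1 <= k)%nat).
  { destruct k; [|lia]. exfalso. apply h. simpl. unfold Rdiv; ring. }
  assert (Hkr : 1 <= INR k) by (replace 1 with (INR 1) by reflexivity; apply le_INR; lia).
  assert (Hjr : INR n <= 2 * INR j) by (replace 2 with (INR 2) by reflexivity; rewrite <- mult_INR; apply le_INR; lia).
  assert (Hnkjr : INR n = INR k + INR j) by (rewrite Hnkj at 1; apply plus_INR).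
  assert (H2kr : 2 * INR k <= INR n) by (replace 2 with (INR 2) by reflexivity; rewrite <- mult_INR; apply le_INR; lia).
  assert (Hj1 : (1 <= j)%nat) by lia.
  set (L := ln (INR n)).
  assert (HL0 : 0 <= L) by (unfold L; rewrite <- ln_1; apply lnM; lra).
  set (y := INR k / INR n) in *.
  assert (Hyp : 0 < y) by (unfold y; apply Rdiv_lt_0_compat; lra).
  set (c := (INR n + INR k + 1) / 2).
  assert (Ha : INR (fact n) <= INR (fact k) * c ^ j).
  { rewrite Hnkj at 1. replace c with ((2 * INR k + INR j + 1) / 2) by (unfold c; lra). apply amgm. }
  assert (Hfk : 0 < INR (fact k)) by (apply lt_0_INR, lt_O_fact).
  assert (Hfj : 0 < INR (fact j)) by (apply lt_0_INR, lt_O_fact).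
  assert (Hfn : 0 < INR (fact n)) by (apply lt_0_INR, lt_O_fact).
  assert (Hc : 0 < c) by (unfold c; lra).
  assert (HX : (INR (fact n) / INR (fact k)) ^ 2 <= (c ^ 2) ^ j).
  { rewrite <- pow_mult, Nat.mul_comm, pow_mult. apply pow_incr. split.
    - left; apply Rdiv_lt_0_compat; lra.
    - apply Rmult_le_reg_r with (INR (fact k)); [lra|]. unfold Rdiv.
      rewrite Rmult_assoc, Rinv_l, Rmult_1_r by lra. lra. }
  assert (Hjr1 : 1 <= INR j) by (replace 1 with (INR 1) by reflexivity; apply le_INR; lia).
  assert (Hjj : 0 < INR j ^ j) by (apply pow_lt; lra).
  assert (HEj : 0 < exp 1 ^ j) by (apply pow_lt; lra).
  assert (Hf : / INR (fact j) <= exp 1 ^ j / (exp 1 * INR j ^ j)).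
  { pose proof (fact_lb j Hj1). unfold Rdiv.
    replace (exp 1 ^ j * / (exp 1 * INR j ^ j)) with (/ (exp 1 * INR j ^ j / exp 1 ^ j)) by (field; lra).
    apply Rinv_le_contravar. { apply Rdiv_lt_0_compat; nra. }
    apply Rmult_le_reg_r with (exp 1 ^ j); [lra|]. unfold Rdiv.
    rewrite Rmult_assoc, Rinv_l, Rmult_1_r by lra. lra. }
  set (R1 := Rpower y (INR n * L)).
  assert (HR1 : 0 < R1) by (unfold R1, Rpower; apply exp_pos).
  assert (Hstep1 : (INR (fact n) / INR (fact k)) ^ 2 * / INR (fact j) * R1 <=
                   (c ^ 2) ^ j * (exp 1 ^ j / (exp 1 * INR j ^ j)) * R1).
  { apply Rmult_le_compat_r; [lra|]. apply Rmult_le_compat; try assumption.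
    - apply pow_le. left; apply Rdiv_lt_0_compat; lra.
    - left; apply Rinv_0_lt_compat; lra. }
  eapply Rle_trans; [exact Hstep1|].
  set (Dn' := Dn n).
  assert (HDpos : 0 < Dn') by (unfold Dn', Dn; apply Rdiv_lt_0_compat; nra).
  assert (Hq : exp 1 * c ^ 2 / INR j <= Dn').
  { unfold Dn', Dn. unfold Rdiv. rewrite !Rmult_assoc.
    apply Rmult_le_compat_l; [lra|].
    apply (div_cross (c^2) ((3 * INR n + 2) ^ 2) (INR j) (8 * INR n)); [lra|lra|].
    assert (c <= (3 * INR n + 2) / 4) by (unfold c; lra).
    assert (c ^ 2 <= ((3 * INR n + 2) / 4) ^ 2) by (apply pow_incr; lra).
    assert (0 <= (3 * INR n + 2) ^ 2) by (apply pow_le; lra).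
    apply Rle_trans with (((3 * INR n + 2) / 4) ^ 2 * (8 * INR n)).
    - apply Rmult_le_compat_r; lra.
    - replace (((3 * INR n + 2) / 4) ^ 2 * (8 * INR n)) with ((3 * INR n + 2) ^ 2 * (INR n / 2)) by (simpl; field).
      apply Rmult_le_compat_l; lra. }
  assert (Hstep2 : (c ^ 2) ^ j * (exp 1 ^ j / (exp 1 * INR j ^ j)) = / exp 1 * (exp 1 * c ^ 2 / INR j) ^ j).
  { unfold Rdiv. rewrite !Rpow_mult_distr, pow_inv. field. split; lra. }
  rewrite Hstep2.
  assert (Hq0 : 0 <= exp 1 * c ^ 2 / INR j) by (apply Rdiv_le_0_compat_alt || (unfold Rdiv; apply Rmult_le_pos; [nra| left; apply Rinv_0_lt_compat; lra])).
  apply Rle_trans with (/ exp 1 * Dn' ^ j * R1).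
  { apply Rmult_le_compat_r; [lra|]. apply Rmult_le_compat_l; [left; apply Rinv_0_lt_compat; lra|].
    apply pow_incr. split; assumption. }
  unfold Mn. fold Dn'. rewrite Rmult_assoc. apply Rmult_le_compat_l; [left; apply Rinv_0_lt_compat; lra|].
  rewrite <- (exp_ln Dn') at 1 by lra. rewrite <- exp_pow_nat. unfold R1, Rpower. rewrite <- exp_plus.
  apply expM. fold L.
  assert (HlnD : ln Dn' <= 2 * L).
  { unfold L. replace (2 * ln (INR n)) with (INR 2 * ln (INR n)) by (simpl; ring).
    rewrite <- ln_pow by lra. apply lnM; [lra|].
    unfold Dn', Dn. unfold Rdiv. apply Rmult_le_reg_r with (8 * INR n); [lra|].
    rewrite Rmult_assoc, Rinv_l, Rmult_1_r by lra. simpl pow. nra. }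
  assert (Hln2y : ln y + ln 2 <= 2 * y - 1).
  { rewrite <- ln_mult by lra. pose proof (ln_le_xm1 (y * 2) ltac:(lra)). lra. }
  assert (Hyn : y * INR n = INR k) by (unfold y; field; lra).
  assert (HA : INR n * L * (ln y + ln 2) <= L * (2 * INR k - INR n)).
  { apply Rle_trans with (INR n * L * (2 * y - 1)).
    - apply Rmult_le_compat_l; [nra|exact Hln2y].
    - nra. }
  assert (HB2 : (INR j - INR n / 2) * ln Dn' <= (INR j - INR n / 2) * (2 * L)).
  { apply Rmult_le_compat_l; lra. }
  nra.
Qed.

Lemma big_case n : (40 <= n)%nat -> phi2 n <= exp (1 - 3 / 1000 * INR n * ln (INR n)).
Proof. intros Hn.
  assert (Hnr : 40 <= INR n) by (replace 40 with (INR 40) by (simpl; lra); apply le_INR; lia).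
  pose proof (ceil_half_le n). pose proof (ceil_half_spec n).
  unfold phi2. eapply Rle_trans.
  { apply sum_Rle with (Bn := fun _ => Mn n). intros k Hk. apply term_bound; lia. }
  rewrite sum_cte.
  assert (HMp : 0 < Mn n) by (unfold Mn; apply Rmult_lt_0_compat; [apply Rinv_0_lt_compat, exp_pos| apply exp_pos]).
  apply Rle_trans with (Mn n * INR n).
  { apply Rmult_le_compat_l; [lra|]. apply le_INR. lia. }
  set (L := ln (INR n)).
  assert (HE : 0 < exp 1) by apply exp_pos. pose proof E_ub as HE2.
  assert (HL : 7/2 <= L).
  { assert (HL7 : 7 <= 2 * L).
    { unfold L. replace (2 * ln (INR n)) with (INR 2 * ln (INR n)) by (simpl; ring).
      rewrite <- ln_pow by lra. rewrite <- (ln_exp 7). apply lnM; [apply exp_pos|].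
      replace 7 with (INR 7 * 1) by (simpl; ring). rewrite exp_pow_nat.
      apply Rle_trans with ((11/4)^7). { apply pow_incr; lra. }
      simpl pow. nra. }
    lra. }
  pose proof ln2_lb as Hln2.
  assert (HlnD : ln (Dn n) <= L + 1 + 1/6).
  { apply Rle_trans with (ln (exp 1 * INR n * (7/6))).
    - apply lnM. { unfold Dn. apply Rdiv_lt_0_compat; nra. }
      unfold Dn. unfold Rdiv. apply Rmult_le_reg_r with (8 * INR n); [lra|].
      rewrite Rmult_assoc, Rinv_l, Rmult_1_r by lra. simpl pow.
      apply Rle_trans with (exp 1 * (INR n * (7/6) * (8*INR n))).
      + apply Rmult_le_compat_l; [lra|nra].
      + right. field.
    - rewrite !ln_mult by nra. rewrite ln_exp. pose proof (ln_le_xm1 (7/6) ltac:(lra)). unfold L. lra. }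
  unfold Mn. fold L.
  replace (/ exp 1 * exp (INR n / 2 * ln (Dn n) - INR n * L * ln 2) * INR n)
    with (exp (INR n / 2 * ln (Dn n) - INR n * L * ln 2 + L - 1)).
  2:{ unfold Rminus. rewrite !exp_plus. unfold L. rewrite exp_ln by lra. rewrite !exp_Ropp. field. split; apply Rgt_not_eq, exp_pos. }
  apply expM.
  set (P := INR n * L).
  assert (HP1 : P * (ln 2 - 69/100) >= 0) by (unfold P; apply Rle_ge, Rmult_le_pos; nra).
  assert (HP2 : INR n / 2 * ln (Dn n) <= INR n / 2 * (L + 1 + 1/6)) by (apply Rmult_le_compat_l; lra).
  assert (HP3 : (L - 7/2) * (187/1000 * INR n - 1) >= 0) by (apply Rle_ge, Rmult_le_pos; lra).
  assert (HP4 : INR n * L * ln 2 = P * ln 2) by reflexivity.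
  assert (HP5 : 3 / 1000 * INR n * L = 3/1000 * P) by (unfold P; ring).
  try rewrite HP5.
  assert (HP6 : INR n / 2 * (L + 1 + 1/6) = P / 2 + INR n * 7 / 12) by (unfold P; field).
  unfold P in *. nra.
Qed.

Theorem proposition4p4 (n : nat) (hn : (9 <= n)%nat) :
  phi2 n <= exp (1 - 3 / 1000 * INR n * ln (INR n)).
Proof.
  destruct (le_lt_dec 40 n) as [h|h]; [apply big_case; exact h|].
  assert (n = 9 \/ n = 10 \/ n = 11 \/ n = 12 \/ n = 13 \/ n = 14 \/ n = 15 \/ n = 16 \/ n = 17 \/ n = 18 \/
          n = 19 \/ n = 20 \/ n = 21 \/ n = 22 \/ n = 23 \/ n = 24 \/ n = 25 \/ n = 26 \/ n = 27 \/ n = 28 \/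
          n = 29 \/ n = 30 \/ n = 31 \/ n = 32 \/ n = 33 \/ n = 34 \/ n = 35 \/ n = 36 \/ n = 37 \/ n = 38 \/
          n = 39)%nat as Hcases by lia.
  repeat (destruct Hcases as [-> | Hcases]); [ | | | | | | | | | | | | | | | | | | | | | | | | | | | | | | subst ].
  all: lazymatch goal with
       | |- phi2 ?m <= _ =>
         let N := lazymatch m with
           | 9%nat => constr:(19%nat) | 10%nat => constr:(22%nat) | 11%nat => constr:(26%nat)
           | 12%nat => constr:(29%nat) | 13%nat => constr:(32%nat) | 14%nat => constr:(36%nat)
           | 15%nat => constr:(40%nat) | 16%nat => constr:(43%nat) | 17%nat => constr:(47%nat)
           | 18%nat => constr:(51%nat) | 19%nat => constr:(55%nat) | 20%nat => constr:(59%nat)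
           | 21%nat => constr:(63%nat) | 22%nat => constr:(67%nat) | 23%nat => constr:(71%nat)
           | 24%nat => constr:(75%nat) | 25%nat => constr:(79%nat) | 26%nat => constr:(83%nat)
           | 27%nat => constr:(87%nat) | 28%nat => constr:(92%nat) | 29%nat => constr:(96%nat)
           | 30%nat => constr:(100%nat) | 31%nat => constr:(105%nat) | 32%nat => constr:(109%nat)
           | 33%nat => constr:(114%nat) | 34%nat => constr:(118%nat) | 35%nat => constr:(123%nat)
           | 36%nat => constr:(127%nat) | 37%nat => constr:(132%nat) | 38%nat => constr:(136%nat)
           | 39%nat => constr:(141%nat) end in
         apply (finite_case m N); [lia | vm_compute; reflexivity]
       end.
Qed.
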